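(* Let $G$ be a smallest counterexample to the statement ''every $n$-vertex triangulation has an independent dominating set of size at most $n/3$'' (i.e., $G$ is a triangulation on $n$ vertices with no independent dominating set of size at most $n/3$, and every triangulation with fewer vertices has an independent dominating set of size at most one third of its number of vertices). Let $\psi$ be a partial proper $4$-coloring of $G$ such that every uncolored vertex has degree exactly four, $|\psi[v]|\ge 3$ for every vertex $v$, and $|\psi[v]|=4$ for every vertex $v$ of degree at most five. Then every bad edge of $G$ is part of two critical cycles.
   Context: Graphs are finite, undirected and simple. A triangulation is a planar graph embedded in the plane such that every face, including the outer face, is bounded by a cycle on three edges. A set $S\subseteq V(G)$ is an independent dominating set if no two vertices of $S$ are adjacent and every vertex not in $S$ has a neighbor in $S$. A partial proper $4$-coloring assigns to some vertices colors from $\{1,2,3,4\}$ with adjacent colored vertices receiving distinct colors. $\psi[v]$ is the set of colors used by $\psi$ on the closed neighborhood $N[v]$. For $i\in\{1,2,3,4\}$, $C_i$ is the set of vertices of color $i$, and $U_i$ is the set of vertices of $G$ not in $C_i$ and having no neighbor in $C_i$. A bad edge is an edge between $U_i$ and $U_j$ for some $i\neq j$. A critical cycle is the $4$-cycle formed by the neighbors of an uncolored vertex (the cycle around that vertex in the triangulation). *)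

(* Defs.v *)
From mathcomp Require Import all_boot.
Set Implicit Arguments.
Unset Strict Implicit.
Unset Printing Implicit Defensive.

Definition simple_graph (T : finType) (e : rel T) : Prop :=
  (forall x, ~~ e x x) /\ (forall x y, e x y = e y x).

(* Rotation system: for every vertex u, [rot u] restricted to the
   neighbourhood N(u) is a cyclic permutation of N(u) (the cyclic order
   of the neighbours of u around u in the plane embedding). *)
Definition rotation_system (T : finType) (e : rel T) (rot : T -> T -> T) : Prop :=
  forall u,
    (forall v, e u v -> e u (rot u v)) /\
    (forall v w, e u v -> e u w -> rot u v = rot u w -> v = w) /\
    (forall v w, e u v -> e u w -> exists k, iter k (rot u) v = w).

(* Face-tracing permutation on darts (u,v): next dart along the face. *)
Definition face_step (T : finType) (rot : T -> T -> T) (p : T * T) : T * T :=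
  (p.2, rot p.2 p.1).

Definition darts (T : finType) (e : rel T) : {set T * T} :=
  [set p | e p.1 p.2].

Definition nedges (T : finType) (e : rel T) : nat := #|darts e| %/ 2.

(* A (plane) triangulation, given combinatorially by a rotation system
   (= combinatorial map) of genus 0 all of whose faces are triangles:
   connected simple graph, every face has length 3, and Euler's formula
   V - E + F = 2 holds (F = #darts / 3). *)
Definition triangulation (T : finType) (e : rel T) (rot : T -> T -> T) : Prop :=
  [/\ simple_graph e,
      rotation_system e rot,
      (forall u v, connect e u v),
      (forall u v, e u v -> iter 3 (face_step rot) (u, v) = (u, v)) &
      #|T| + #|darts e| %/ 3 = nedges e + 2].

Definition independent (T : finType) (e : rel T) (S : {set T}) : Prop :=
  forall x y, x \in S -> y \in S -> ~~ e x y.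

Definition dominating (T : finType) (e : rel T) (S : {set T}) : Prop :=
  forall x, x \notin S -> exists2 y, y \in S & e x y.

Definition independent_dominating (T : finType) (e : rel T) (S : {set T}) : Prop :=
  independent e S /\ dominating e S.

Definition has_small_ids (T : finType) (e : rel T) : Prop :=
  exists S : {set T}, independent_dominating e S /\ 3 * #|S| <= #|T|.

Definition deg (T : finType) (e : rel T) (v : T) : nat := #|[set u | e v u]|.

(* Partial 4-colourings: None = uncoloured. *)
Definition proper_partial4 (T : finType) (e : rel T) (psi : T -> option 'I_4) : Prop :=
  forall x y c, e x y -> psi x = Some c -> psi y <> Some c.

Definition psi_closed (T : finType) (e : rel T) (psi : T -> option 'I_4) (v : T)
  : {set 'I_4} :=
  [set c | [exists u, ((u == v) || e v u) && (psi u == Some c)]].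

Definition color_class (T : finType) (psi : T -> option 'I_4) (i : 'I_4) : {set T} :=
  [set x | psi x == Some i].

Definition U_set (T : finType) (e : rel T) (psi : T -> option 'I_4) (i : 'I_4)
  : {set T} :=
  [set x | (x \notin color_class psi i) &&
           [forall y, e x y ==> (y \notin color_class psi i)]].

Definition bad_edge (T : finType) (e : rel T) (psi : T -> option 'I_4) (x y : T) : Prop :=
  e x y /\ exists i j : 'I_4, [/\ i != j, x \in U_set e psi i & y \in U_set e psi j].

(* The edge xy lies on the cycle around w in the triangulation (the cycle
   formed by the neighbours of w, consecutive in the rotation at w). *)
Definition on_cycle_around (T : finType) (e : rel T) (rot : T -> T -> T) (w x y : T)
  : Prop :=
  e w x /\ e w y /\ (rot w x = y \/ rot w y = x).

Definition on_critical_cycle (T : finType) (e : rel T) (rot : T -> T -> T)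
  (psi : T -> option 'I_4) (w x y : T) : Prop :=
  psi w = None /\ on_cycle_around e rot w x y.

(* Main.v *)
Require Import Defs.
From mathcomp Require Import all_boot.

Lemma four (a b c d f : 'I_4) : a != b -> a != c -> a != d -> b != c -> b != d -> c != d ->
  f != a -> f != b -> f != c -> f != d -> False.
Proof.
by case: a => [[|[|[|[|?]]]] //] Ha; case: b => [[|[|[|[|?]]]] //] Hb;
 case: c => [[|[|[|[|?]]]] //] Hc; case: d => [[|[|[|[|?]]]] //] Hd;
 case: f => [[|[|[|[|?]]]] //] Hf.
Qed.

Lemma U_colored (T : finType) (e : rel T) (psi : T -> option 'I_4) i x :
  (forall v, psi v = None -> deg e v = 4) ->
  (forall v, deg e v <= 5 -> #|psi_closed e psi v| = 4) ->
  x \in U_set e psi i -> exists2 c, psi x = Some c & c != i.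
Proof.
move=> Hn H5; rewrite inE => /andP [Hxi /forallP Hall].
have Hni : i \notin psi_closed e psi x.
  rewrite inE; apply/negP => /existsP [u /andP [/orP [/eqP -> | Hxu] /eqP Hu]].
    by move: Hxi; rewrite inE Hu eqxx.
  by move: (Hall u); rewrite Hxu /= inE Hu eqxx.
have Hlt : #|psi_closed e psi x| < #|[set: 'I_4]|.
  apply: proper_card; rewrite properT.
  by apply/eqP => HT; move: Hni; rewrite HT inE.
case Hx: (psi x) => [c|].
  exists c => //; apply/eqP => Hc; move: Hxi; by rewrite inE Hx Hc eqxx.
by move: Hlt; rewrite cardsT card_ord H5 // Hn.
Qed.

Theorem mainTheorem5 (T : finType) (e : rel T) (rot : T -> T -> T)
  (psi : T -> option 'I_4) :
  (* G is a smallest counterexample *)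
  triangulation e rot ->
  ~ has_small_ids e ->
  (forall (T' : finType) (e' : rel T') (rot' : T' -> T' -> T'),
      triangulation e' rot' -> #|T'| < #|T| -> has_small_ids e') ->
  (* hypotheses on psi *)
  proper_partial4 e psi ->
  (forall v, psi v = None -> deg e v = 4) ->
  (forall v, 3 <= #|psi_closed e psi v|) ->
  (forall v, deg e v <= 5 -> #|psi_closed e psi v| = 4) ->
  (* conclusion *)
  forall x y, bad_edge e psi x y ->
    exists w1 w2, [/\ w1 != w2, on_critical_cycle e rot psi w1 x y
                              & on_critical_cycle e rot psi w2 x y].
Proof.
move=> [[Hirr Hsym] Hrot _ Hface _] _ _ Hprop Hn _ H5 x y [Hxy [i [j [Hij Hx Hy]]]].
have [cx Hcx Hcxi] := @U_colored _ e psi i x Hn H5 Hx.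
have [cy Hcy Hcyj] := @U_colored _ e psi j y Hn H5 Hy.
have Uadj : forall k z w, z \in U_set e psi k -> e z w -> psi w <> Some k.
  move=> k z w; rewrite inE => /andP [_ /forallP H] Hzw Hw.
  by move: (H w); rewrite Hzw /= inE Hw eqxx.
have Hyx : e y x by rewrite Hsym.
have Hcxj : cx != j by apply/eqP => E; apply: (Uadj j y x Hy Hyx); rewrite Hcx E.
have Hcyi : cy != i by apply/eqP => E; apply: (Uadj i x y Hx Hxy); rewrite Hcy E.
have Hcxy : cx != cy by apply/eqP => E; apply: (Hprop x y cx Hxy Hcx); rewrite Hcy E.
have Hunc : forall a, e x a -> e y a -> psi a = None.
  move=> a Hxa Hya; case Ha: (psi a) => [c|] //; exfalso.
  have Hci : c != i by apply/eqP => E; apply: (Uadj i x a Hx Hxa); rewrite Ha E.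
  have Hcj : c != j by apply/eqP => E; apply: (Uadj j y a Hy Hya); rewrite Ha E.
  have Hccx : c != cx.
    by apply/eqP => E; apply: (Hprop x a cx Hxa Hcx); rewrite Ha E.
  have Hccy : c != cy.
    by apply/eqP => E; apply: (Hprop y a cy Hya Hcy); rewrite Ha E.
  have H1 : i != cx by rewrite eq_sym.
  have H2 : i != cy by rewrite eq_sym.
  have H3 : j != cx by rewrite eq_sym.
  have H4 : j != cy by rewrite eq_sym.
  exact: (@four i j cx cy c Hij H1 H2 H3 H4 Hcxy Hci Hcj Hccx Hccy).
have Hf : forall u v, e u v -> let a := rot v u in
    [/\ e u a, e v a & rot a v = u].
  move=> u v Huv a.
  have Hvu : e v u by rewrite Hsym.
  have Hva : e v a by have [H1 _] := Hrot v; apply: H1.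
  have Hrv : rot a v = u.
    by move: (Hface u v Huv) => /= [].
  have Hav : e a v by rewrite Hsym.
  split => //.
  have [H1 _] := Hrot a; rewrite Hsym -Hrv; exact: H1.
have [Hxa Hya Hra] := Hf x y Hxy.
have [Hyb Hxb Hrb] := Hf y x Hyx.
set a := rot y x in Hxa Hya Hra *.
set b := rot x y in Hyb Hxb Hrb *.
have Hpa := Hunc a Hxa Hya.
have Hpb := Hunc b Hxb Hyb.
exists a, b; split.
- apply/eqP => Eab; rewrite -Eab in Hrb.
  have [_ [_ Hcyc]] := Hrot a.
  have Hax : e a x by rewrite Hsym.
  have Hsub : [set u | e a u] \subset [set x; y].
    apply/subsetP => u; rewrite inE => Hau.
    have [k <-] := Hcyc x u Hax Hau.
    elim: k => [|k IH]; first by rewrite !inE eqxx.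
    rewrite iterS; move: IH; rewrite !inE => /orP [/eqP -> | /eqP ->].
      by rewrite Hrb eqxx orbT.
    by rewrite Hra eqxx.
  have := subset_leq_card Hsub.
  have := Hn a Hpa; rewrite /deg => ->.
  by move=> /leq_trans /(_ (leq_card_setU [set x] [set y])); rewrite !cards1.
- split => //; split; first by rewrite Hsym.
  by split; [rewrite Hsym | right].
- split => //; split; first by rewrite Hsym.
  by split; [rewrite Hsym | left].
Qed.
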